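(* Let $\mathcal C$ be a category of noncrossing $\{x,y\}$-coloured partitions ($x^{-1}=x$, $y^{-1}=y$) all of whose blocks have even size, and which contains a partition with a block of size at least four. If no block of any partition in $\mathcal C$ contains points of both colours, then $\mathcal C$ is a free product.
   Context: Colour sets and partitions: a colour set is a set $\mathcal A$ with an involution $a\mapsto a^{-1}$. For words $w,w'$ on $\mathcal A$, an element of $P^{\mathcal A}(w,w')$ is a partition of $|w|+|w'|$ points drawn as an upper row coloured (left to right) by $w$ and a lower row coloured by $w'$; its subsets are blocks. It is noncrossing if there are no four points $k_1<k_2<k_3<k_4$ (ordering: upper row left to right, then lower row right to left) with $k_1,k_3$ in one block and $k_2,k_4$ in a different block. Category operations: tensor product, composition (erasing middle points and closed loops), adjoint (reflection), rotation (moving an extreme point to the other row and replacing its colour $a$ by $a^{-1}$). A category of noncrossing partitions is a family $\mathcal C(w,w')\subset NC^{\mathcal A}(w,w')$ stable under these operations and containing $\pi(a,a)$ for all $a$. For a category $\mathcal C$ on $\{x,y\}$, $\mathcal C_x$ (resp. $\mathcal C_y$) is the set of partitions in $\mathcal C$ all of whose points are coloured $x$ (resp. $y$); $\mathcal C$ is a free product if it equals the category generated by $\mathcal C_x\cup\mathcal C_y$. *)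

(* Defs.v *)
From mathcomp Require Import all_boot.
Set Implicit Arguments. Unset Strict Implicit. Unset Printing Implicit Defensive.

Definition colx : bool := false.
Definition coly : bool := true.

(* Points are indexed in the CYCLIC
   order of the paper: index i < |w| is the i-th upper point from the left;
   index |w| + k is the k-th lower point counted from the RIGHT. *)
Record cpart := CPart {
  up : seq bool;
  lo : seq bool;
  blocks : {set {set 'I_(size up + size lo)}};
  blocks_ok : partition blocks [set: 'I_(size up + size lo)] }.

Definition npts (p : cpart) : nat := size (up p) + size (lo p).

Definition colour (p : cpart) (u : 'I_(size (up p) + size (lo p))) : bool :=
  if val u < size (up p) then nth colx (up p) u
  else nth colx (rev (lo p)) (val u - size (up p)).

Arguments colour : clear implicits.

(* same block relation on cyclic indices (false when out of range) *)
Definition sb (p : cpart) (a b : nat) : bool :=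
  [exists u : 'I_(size (up p) + size (lo p)),
   exists v : 'I_(size (up p) + size (lo p)),
     [&& val u == a, val v == b & v \in pblock (blocks p) u]].

(* Points described as (row, position from the left); row true = upper. *)
Definition valid (p : cpart) (x : bool * nat) : bool :=
  if x.1 then x.2 < size (up p) else x.2 < size (lo p).

Definition pidx (p : cpart) (x : bool * nat) : nat :=
  if x.1 then x.2 else size (up p) + (size (lo p) - x.2.+1).

Definition conn (p : cpart) (x y : bool * nat) : bool :=
  [&& valid p x, valid p y & sb p (pidx p x) (pidx p y)].

Definition noncrossing (p : cpart) : Prop :=
  forall k1 k2 k3 k4, k1 < k2 -> k2 < k3 -> k3 < k4 -> k4 < npts p ->
    sb p k1 k3 -> sb p k2 k4 -> sb p k1 k2.

Definition is_id (a : bool) (r : cpart) : Prop :=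
  up r = [:: a] /\ lo r = [:: a] /\ sb r 0 1.

Definition tsplit (p : cpart) (x : bool * nat) : (bool * nat) + (bool * nat) :=
  let s := if x.1 then size (up p) else size (lo p) in
  if x.2 < s then inl x else inr (x.1, x.2 - s).

Definition is_tensor (p q r : cpart) : Prop :=
  up r = up p ++ up q /\ lo r = lo p ++ lo q /\
  forall x y, conn r x y =
    match tsplit p x, tsplit p y with
    | inl a, inl b => conn p a b
    | inr a, inr b => conn q a b
    | _, _ => false
    end.

Definition is_adjoint (p r : cpart) : Prop :=
  up r = lo p /\ lo r = up p /\
  forall x y, conn r x y = conn p (~~ x.1, x.2) (~~ y.1, y.2).

(* r = q p : p on top of q (lo p = up q), middle points and loops erased.
   Vertices of the stacked diagram: [0,a) upper row of p, [a,a+b) middle row,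
   [a+b,a+b+c) lower row of q, all from left to right. *)
Definition stack_edge (p q : cpart) (N : nat) : rel 'I_N :=
  fun u v =>
    let a := size (up p) in let b := size (lo p) in
    let toP k := if k < a then (true, k) else (false, k - a) in
    let toQ k := if k < a + b then (true, k - a) else (false, k - (a + b)) in
    ((val u < a + b) && (val v < a + b) && conn p (toP (val u)) (toP (val v)))
    || ((a <= val u) && (a <= val v) && conn q (toQ (val u)) (toQ (val v))).

Definition is_comp (p q r : cpart) : Prop :=
  lo p = up q /\ up r = up p /\ lo r = lo q /\
  let N := size (up p) + size (lo p) + size (lo q) in
  let emb x := if x.1 then x.2 else size (up p) + size (lo p) + x.2 in
  forall x y, conn r x y =
    [&& valid r x, valid r y &
        [exists u : 'I_N, exists v : 'I_N,
           [&& val u == emb x, val v == emb y &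
               connect (@stack_edge p q N) u v]]].

(* Rotations (colours are self-inverse here, so colours are unchanged).
   rotL: move the leftmost upper point to the leftmost lower position.
   rotR: move the rightmost upper point to the rightmost lower position. *)
Definition is_rotL (p r : cpart) : Prop :=
  exists a w, up p = a :: w /\ up r = w /\ lo r = a :: lo p /\
    forall k l, sb r k l =
      sb p (if k.+1 == npts p then 0 else k.+1) (if l.+1 == npts p then 0 else l.+1).

Definition is_rotR (p r : cpart) : Prop :=
  exists a w, up p = rcons w a /\ up r = w /\ lo r = rcons (lo p) a /\
    forall k l, sb r k l = sb p k l.

Definition category (C : cpart -> Prop) : Prop :=
  (forall p, C p -> noncrossing p) /\
  (forall a r, is_id a r -> C r) /\
  (forall p q r, C p -> C q -> is_tensor p q r -> C r) /\
  (forall p q r, C p -> C q -> is_comp p q r -> C r) /\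
  (forall p r, C p -> is_adjoint p r -> C r) /\
  (forall p r, is_rotL p r \/ is_rotR p r -> (C p -> C r) /\ (C r -> C p)).

Definition gen_cat (S : cpart -> Prop) (p : cpart) : Prop :=
  forall D, category D -> (forall q, S q -> D q) -> D p.

Definition mono (c : bool) (p : cpart) : bool :=
  all (eq_op c) (up p) && all (eq_op c) (lo p).

Definition C_col (C : cpart -> Prop) (c : bool) (p : cpart) : Prop :=
  C p /\ mono c p.

Definition free_product (C : cpart -> Prop) : Prop :=
  forall p, C p <-> gen_cat (fun q => C_col C colx q \/ C_col C coly q) p.

(* Main.v *)
Require Import Defs.
From mathcomp Require Import all_boot zify.
Set Implicit Arguments. Unset Strict Implicit. Unset Printing Implicit Defensive.

Definition dat (p : cpart) (u l : seq bool) (e : rel nat) :=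
  [/\ up p = u, lo p = l &
   forall a b, sb p a b = [&& a < size u + size l, b < size u + size l & e a b]].

Lemma sb_pblock (p : cpart) (x y : 'I_(size (up p) + size (lo p))) :
  sb p x y = (y \in pblock (blocks p) x).
Proof.
apply/existsP/idP => [[u /existsP [v /and3P [/eqP hu /eqP hv H]]]|H].
  have -> : x = u by apply: val_inj.
  by have -> : y = v by apply: val_inj.
by exists x; apply/existsP; exists y; rewrite !eqxx.
Qed.

Lemma sb_range (p : cpart) a b : sb p a b -> a < npts p /\ b < npts p.
Proof. by rewrite /sb; case/existsP=> u /existsP [v /and3P [/eqP <- /eqP <- _]]; split; apply: ltn_ord. Qed.

Lemma sb_ord (p : cpart) a b : sb p a b =
  [&& a < npts p, b < npts p &
     [exists u : 'I_(size (up p) + size (lo p)), exists v : 'I_(size (up p) + size (lo p)),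
       [&& val u == a, val v == b & v \in pblock (blocks p) u]]].
Proof.
case H: (sb p a b); move: H; rewrite {1}/sb => H; rewrite H ?andbF //.
by have [-> ->] := sb_range (a:=a) (b:=b) (p:=p) H.
Qed.

Lemma sb_equiv (p : cpart) :
  {in [set: 'I_(size (up p) + size (lo p))] & &,
     equivalence_rel (fun x y : 'I_(size (up p) + size (lo p)) => sb p x y)}.
Proof.
move=> x y z _ _ _; rewrite !sb_pblock.
by apply: (pblock_equivalence (blocks_ok p)); rewrite inE.
Qed.

Lemma sb_refl (p : cpart) a : a < npts p -> sb p a a.
Proof. move=> h; have := @sb_equiv p (Ordinal h) (Ordinal h) (Ordinal h).
by rewrite !inE => /(_ isT isT isT) [] . Qed.

Lemma sb_trans (p : cpart) a b c : sb p a b -> sb p b c -> sb p a c.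
Proof.
move=> h1 h2; have [ha hb] := sb_range h1; have [_ hc] := sb_range h2.
have := @sb_equiv p (Ordinal ha) (Ordinal hb) (Ordinal hc).
by rewrite !inE => /(_ isT isT isT) [] _ /(_ h1) /= ->.
Qed.

Lemma sb_sym (p : cpart) a b : sb p a b -> sb p b a.
Proof.
move=> h1; have [ha hb] := sb_range h1.
have := @sb_equiv p (Ordinal ha) (Ordinal hb) (Ordinal ha).
by rewrite !inE => /(_ isT isT isT) [] h0 /(_ h1) /= <-; apply: sb_refl.
Qed.

Definition equiv_on (N : nat) (e : rel nat) :=
  [/\ forall a, a < N -> e a a,
      forall a b, a < N -> b < N -> e a b -> e b a &
      forall a b c, a < N -> b < N -> c < N -> e a b -> e b c -> e a c].

Lemma exists_dat u l (e : rel nat) : equiv_on (size u + size l) e ->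
  exists p, dat p u l e.
Proof.
case=> er es et.
set N := size u + size l.
pose R := fun x y : 'I_N => e x y.
have eqR : {in [set: 'I_N] & &, equivalence_rel R}.
  move=> x y z _ _ _; rewrite /R; split; first exact: er.
  move=> hxy; apply/idP/idP => h.
    exact: (et _ _ _ (ltn_ord _) (ltn_ord _) (ltn_ord _) (es _ _ (ltn_ord _) (ltn_ord _) hxy) h).
  exact: (et _ _ _ (ltn_ord _) (ltn_ord _) (ltn_ord _) hxy h).
exists (@CPart u l (equivalence_partition R [set: 'I_N]) (equivalence_partitionP eqR)).
split => // a b; rewrite sb_ord /npts /=.
case ha: (a < N); case hb: (b < N) => //=.
apply/existsP/idP => [[x /existsP [y /and3P [/eqP hx /eqP hy H]]]|H].
  by rewrite (pblock_equivalence_partition eqR) ?inE // /R hx hy in H.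
exists (Ordinal ha); apply/existsP; exists (Ordinal hb); rewrite !eqxx /=.
by rewrite (pblock_equivalence_partition eqR) ?inE.
Qed.

Lemma dat_self (p : cpart) : dat p (up p) (lo p) (sb p).
Proof.
split=> // a b; case h: (sb p a b); last by rewrite !andbF.
by have [-> ->] := sb_range h.
Qed.

Lemma dat_equiv p u l e : dat p u l e -> equiv_on (size u + size l) e.
Proof.
case=> hu hl hs; have hN : npts p = size u + size l by rewrite /npts hu hl.
split.
- move=> a ha; have := sb_refl (p:=p) (a:=a); rewrite hs hN ha => /(_ isT). by case/andP.
- move=> a b ha hb h; have : sb p a b by rewrite hs ha hb.
  by move/sb_sym; rewrite hs => /and3P [].
- move=> a b c ha hb hc h1 h2.
  have h : sb p a c by apply: (@sb_trans _ _ b); rewrite hs ?ha ?hb ?hc.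
  by move: h; rewrite hs => /and3P [].
Qed.

Lemma dat_uniq p q u l e e' : dat p u l e -> dat q u l e' ->
  (forall a b, a < size u + size l -> b < size u + size l -> e a b = e' a b) -> p = q.
Proof.
case: p => u1 l1 B1 ok1; case: q => u2 l2 B2 ok2.
case=> /= h1 h2 hs1 [/= h3 h4 hs2] hee; subst.
have hsb : forall x y : 'I_(size u + size l),
   (y \in pblock B1 x) = (y \in pblock B2 x).
  move=> x y.
  have := sb_pblock (p := CPart ok1) x y; have := sb_pblock (p := CPart ok2) x y.
  rewrite /= => <- <-; rewrite hs1 hs2 /=.
  by rewrite !ltn_ord /= hee.
have hB : B1 = B2.
  have key : forall (P1 P2 : {set {set 'I_(size u + size l)}}),
     partition P1 setT -> partition P2 setT ->
     (forall x y, (y \in pblock P1 x) = (y \in pblock P2 x)) -> P1 \subset P2.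
    move=> P1 P2 o1 o2 hp; apply/subsetP => B hB.
    case/and3P: o1 => /eqP c1 t1 n1; case/and3P: o2 => /eqP c2 t2 n2.
    have : B != set0 by apply: contraNneq n1 => <-.
    case/set0Pn => x hx.
    have -> : B = pblock P1 x by rewrite (def_pblock t1 hB hx).
    have -> : pblock P1 x = pblock P2 x by apply/setP => y; rewrite hp.
    by apply: pblock_mem; rewrite c2 inE.
  by apply/eqP; rewrite eqEsubset !key // => x y; rewrite hsb.
subst; congr CPart; exact: bool_irrelevance.
Qed.

Ltac dif := repeat match goal with
 | |- context [if ?b then _ else _] =>
   lazymatch b with context[if _ then _ else _] => fail | _ => let h := fresh "h" in case h: b end
 end.

Definition fr n j x := if x + j < n then x + j else x + j - n.

Lemma dat_ext p u l e e' : dat p u l e ->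
  (forall a b, a < size u + size l -> b < size u + size l -> e a b = e' a b) -> dat p u l e'.
Proof.
case=> h1 h2 h3 he; split=> // a b; rewrite h3.
by case ha: (a < _); case hb: (b < _) => //=; rewrite he.
Qed.

Lemma equiv_comp n m e f : equiv_on n e -> (forall x, x < m -> f x < n) ->
  equiv_on m (fun x y => e (f x) (f y)).
Proof.
case=> er es et hf; split.
- by move=> a ha; apply: er; apply: hf.
- by move=> a b ha hb; apply: es; apply: hf.
- by move=> a b c ha hb hc; apply: et; apply: hf.
Qed.

Section Cat.
Variable D : cpart -> Prop.
Hypothesis hD : category D.

Lemma to_L u l e p r : dat p u l e -> dat r [::] (rev (u ++ rev l)) e -> (D p <-> D r).
Proof.
case: hD => [hnc [hid [hten [hcomp [hadj hrot]]]]].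
elim/last_ind: u l p => [|w a IH] l p hp hr.
  rewrite /= revK in hr.
  have -> : p = r by apply: (dat_uniq hp hr).
  by [].
have hq : exists q, dat q w (rcons l a) e.
  apply: exists_dat.
  have -> : size w + size (rcons l a) = size (rcons w a) + size l by rewrite !size_rcons; lia.
  exact: dat_equiv hp.
case: hq => q hq.
have e1 : D p <-> D q.
  apply: hrot; right; exists a, w.
  case: hp => hp1 hp2 hp3; case: hq => hq1 hq2 hq3.
  split; first exact: hp1. split; first exact: hq1.
  split; first by rewrite hq2 hp2.
  move=> k m; rewrite hp3 hq3.
  have -> : size w + size (rcons l a) = size (rcons w a) + size l by rewrite !size_rcons; lia.
  by [].
rewrite e1; apply: IH hq _.
by rewrite rev_rcons /= -cat_rcons.
Qed.

Lemma rotL_step a l e p r : dat p [:: a] l e ->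
  dat r [::] (a :: l) (fun x y => e (fr (size l).+1 1 x) (fr (size l).+1 1 y)) ->
  (D p <-> D r).
Proof.
case: hD => [hnc [hid [hten [hcomp [hadj hrot]]]]].
move=> hp hr; apply: hrot; left; exists a, [::].
case: hp => hp1 hp2 hp3; case: hr => hr1 hr2 hr3.
split=> //; split=> //; split; first by rewrite hr2 hp2.
move=> k m; rewrite hr3 hp3 /npts hp1 hp2 /= /fr.
have sub : forall k, (if k.+1 == (size l).+1 then 0 else k.+1) < (size l).+1 = (k < (size l).+1).
  by move=> k'; dif; lia.
rewrite !sub; case hk: (k < _); case hm: (m < _) => //=.
congr e; dif; lia.
Qed.

Lemma rot1_L a t e p r : dat p [::] (rev (a :: t)) e ->
  dat r [::] (rev (rcons t a)) (fun x y => e (fr (size t).+1 1 x) (fr (size t).+1 1 y)) ->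
  (D p <-> D r).
Proof.
move=> hp hr.
have [q hq] : exists q, dat q [:: a] (rev t) e.
  apply: exists_dat; have := dat_equiv hp; rewrite /= !size_rev /= add0n add1n; exact.
rewrite -(to_L hq (r:=p)); last by rewrite revK.
apply: rotL_step hq _.
by rewrite size_rev -rev_rcons.
Qed.

Lemma rot_L j s e p r : j <= size s -> dat p [::] (rev s) e ->
  dat r [::] (rev (rot j s)) (fun x y => e (fr (size s) j x) (fr (size s) j y)) ->
  (D p <-> D r).
Proof.
elim: j r => [|j IH] r hj hp hr.
  rewrite rot0 in hr; have -> : p = r; last by [].
  apply: (dat_uniq hp hr) => a b; rewrite /= size_rev => ha hb.
  by rewrite /fr !addn0 ha hb.
have [q hq] : exists q, dat q [::] (rev (rot j s))
    (fun x y => e (fr (size s) j x) (fr (size s) j y)).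
  apply: exists_dat; apply: (equiv_comp (n := size s)).
    by have := dat_equiv hp; rewrite /= size_rev.
  by move=> x; rewrite /= size_rev size_rot /fr => hx; dif; lia.
rewrite (IH q (ltnW hj) hp hq).
have hsz : size (rot j s) = size s by rewrite size_rot.
case hrs: (rot j s) => [|a t].
  by move: hsz; rewrite hrs => hs; move: hj; rewrite -hs.
have hst : (size t).+1 = size s by rewrite -hsz hrs.
rewrite hrs in hq; apply: (rot1_L hq).
have -> : rcons t a = rot j.+1 s by rewrite -add1n rotD ?add1n // hrs rot1_cons.
apply: (dat_ext hr) => x y; rewrite /= size_rev size_rot => hx hy.
by rewrite hst /fr; congr e; dif; lia.
Qed.

End Cat.

Ltac dcmp := repeat match goal with
 | |- context [?a <= ?b] => let h := fresh "c" in case h: (a <= b)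
 end.

Section Cat2.
Variable D : cpart -> Prop.
Hypothesis hD : category D.

Definition tens_rel (kq : nat) (eq ep : rel nat) : rel nat := fun x y =>
  if (x < kq) && (y < kq) then eq x y
  else if (kq <= x) && (kq <= y) then ep (x - kq) (y - kq) else false.

Lemma tensor_L p q r : D p -> D q -> up p = [::] -> up q = [::] ->
  dat r [::] (lo p ++ lo q) (tens_rel (size (lo q)) (sb q) (sb p)) -> D r.
Proof.
case: hD => [hnc [hid [hten [hcomp [hadj hrot]]]]].
move=> Dp Dq hp hq [hr1 hr2 hr3]; apply: (hten p q r Dp Dq).
split; first by rewrite hr1 hp hq.
split; first by rewrite hr2.
move=> [bx i] [bY j]; rewrite /conn /tsplit /valid /pidx /= hr3 hr1 hr2 hp hq /= /tens_rel.
rewrite size_cat.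
case: bx; case: bY => /=; dif => /=; rewrite /conn /valid /pidx /= ?hp ?hq /=; dcmp => //=; try lia.
all: try (f_equal; lia).
Qed.

Lemma pair_L c r : dat r [::] [:: c; c] (fun _ _ => true) -> D r.
Proof.
have hD' := hD; case: hD => [hnc [hid [hten [hcomp [hadj hrot]]]]].
move=> hr.
have [r0 h0] : exists r0, dat r0 [:: c] [:: c] (fun _ _ => true).
  by apply: exists_dat; split.
have : D r0.
  apply: (hid c); case: h0 => h1 h2 h3; split=> //; split=> //; rewrite h3.
by rewrite (to_L hD' h0 hr).
Qed.

Lemma connect_eqv (T : finType) (R : rel T) :
  (forall x, R x x) -> (forall x y z, R x y -> R y z -> R x z) ->
  forall x y, connect R x y = R x y.
Proof.
move=> hr ht x y; apply/idP/idP; last exact: connect1.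
move/connectP => [pth hp ->]; elim: pth x hp => //= z pth IH x /andP [h1 h2].
exact: ht h1 (IH _ h2).
Qed.

Lemma ex2_ord N (P : 'I_N -> 'I_N -> bool) (Q : nat -> nat -> bool) a b :
  (forall u v : 'I_N, P u v = Q u v) ->
  [exists u : 'I_N, exists v : 'I_N, [&& val u == a, val v == b & P u v]] =
  [&& a < N, b < N & Q a b].
Proof.
move=> hPQ; apply/existsP/idP => [[u /existsP [v /and3P [/eqP <- /eqP <- h]]]|].
  by rewrite !ltn_ord -hPQ.
case/and3P => ha hb h; exists (Ordinal ha); apply/existsP; exists (Ordinal hb).
by rewrite !eqxx hPQ.
Qed.

Lemma cap_L c l e p r : D p -> dat p [:: c; c] l e -> e 0 1 ->
  dat r [::] l (fun x y => e x.+2 y.+2) -> D r.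
Proof.
have hD' := hD; case: hD => [hnc [hid [hten [hcomp [hadj hrot]]]]].
move=> Dp hp h01 hr.
have [q hq] : exists q, dat q [::] [:: c; c] (fun _ _ => true).
  by apply: exists_dat; split.
have [er es et] := dat_equiv hp.
apply: (hcomp q p r (pair_L hq) Dp).
case: hq => hq1 hq2 hq3; case: hp => hp1 hp2 hp3; case: hr => hr1 hr2 hr3.
split; first by rewrite hq2 hp1.
split; first by rewrite hr1 hq1.
split; first by rewrite hr2 hp2.
rewrite hq1 hq2 hp2 /=.
set N := 0 + 2 + size l.
pose g a := if a < 2 then a else 2 + (size l - (a - 2).+1).
have e2 : forall u v, u < 2 -> v < 2 -> e u v.
  case=> [|[|u]] [|[|v]] // _ _; by [apply: er | apply: es].
have hpn : npts p = N by rewrite /npts hp1 hp2.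
have hE : forall u v : 'I_N, connect (stack_edge q p (N:=N)) u v = sb p (g u) (g v).
  move=> u v; rewrite (@eq_connect _ _ (fun u v : 'I_N => sb p (g u) (g v))).
    apply: connect_eqv => [x|x y z]; last exact: sb_trans.
    by apply: sb_refl; rewrite hpn /g; have := ltn_ord x; dif; lia.
  move=> x y; have := ltn_ord x; have := ltn_ord y.
  rewrite /stack_edge /conn /valid /pidx hq1 hq2 hp1 hp2 hq3 !hp3 /g /N /=.
  move=> hy hx; dif => /=; dcmp => //=; try lia.
  all: try (f_equal; lia).
  all: try (rewrite e2 //; lia).
  all: try (rewrite orbF; f_equal; f_equal; lia).
move=> [[] i] [[] j]; rewrite (ex2_ord (Q := fun a b => sb p (g a) (g b))) //.
all: rewrite /conn /valid /pidx hr1 hr2 hr3 !hp3 /g /N /=; dif => /=; dcmp => //=; try lia.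
all: try (f_equal; lia).
Qed.

Lemma ex_comp p u l e u' l' f : dat p u l e ->
  (forall x, x < size u' + size l' -> f x < size u + size l) ->
  exists q, dat q u' l' (fun x y => e (f x) (f y)).
Proof. by move=> hp hf; apply: exists_dat; apply: equiv_comp hf; apply: dat_equiv hp. Qed.

Lemma capF_L c s e p r : D p -> dat p [::] (rev (c :: c :: s)) e -> e 0 1 ->
  dat r [::] (rev s) (fun x y => e x.+2 y.+2) -> D r.
Proof.
move=> Dp hp h01 hr.
have [q hq] : exists q, dat q [:: c; c] (rev s) e.
  by apply: exists_dat; have := dat_equiv hp; rewrite /= !size_rev.
have Dq : D q by rewrite (to_L hD hq (r:=p)) // revK.
exact: cap_L Dq hq h01 hr.
Qed.

Lemma capP_L c t1 t2 e p r : D p -> dat p [::] (rev (t1 ++ c :: c :: t2)) e ->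
  e (size t1) (size t1).+1 ->
  dat r [::] (rev (t1 ++ t2))
    (fun x y => e (if x < size t1 then x else x.+2) (if y < size t1 then y else y.+2)) -> D r.
Proof.
move=> Dp hp h01 hr.
set n := size (t1 ++ c :: c :: t2).
have hn : n = size t1 + size t2 + 2 by rewrite /n size_cat /=; lia.
have [p1 hp1] : exists q, dat q [::] (rev (rot (size t1) (t1 ++ c :: c :: t2)))
    (fun x y => e (fr n (size t1) x) (fr n (size t1) y)).
  apply: ex_comp hp _ => x; rewrite /= !size_rev size_rot -/n /fr => hx; dif; lia.
have Dp1 : D p1.
  by rewrite -(rot_L hD _ hp hp1) // size_cat leq_addr.
rewrite rot_size_cat /= in hp1.
have [p2 hp2] : exists q, dat q [::] (rev (t2 ++ t1))
    (fun x y => e (fr n (size t1) x.+2) (fr n (size t1) y.+2)).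
  apply: (ex_comp (f := fun x => x.+2)) hp1 _ => x; rewrite /= !size_rev /= !size_cat /=; lia.
have Dp2 : D p2.
  apply: (capF_L Dp1 hp1 _ hp2).
  rewrite /fr -/n; dif; rewrite ?add0n //; try lia.
have [p3 hp3] : exists q, dat q [::] (rev (rot (size t2) (t2 ++ t1)))
    (fun x y => e (fr n (size t1) (fr (size (t2 ++ t1)) (size t2) x).+2)
                  (fr n (size t1) (fr (size (t2 ++ t1)) (size t2) y).+2)).
  apply: (ex_comp (f := fr (size (t2 ++ t1)) (size t2))) hp2 _ => x; rewrite /= !size_rev size_rot /fr => hx; dif; move: hx h; rewrite ?size_cat; lia.
have Dp3 : D p3.
  by rewrite -(rot_L hD _ hp2 hp3) // size_cat leq_addr.
rewrite rot_size_cat in hp3.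
have -> : r = p3.
  apply: (dat_uniq hr hp3) => x y; rewrite /= !size_rev !size_cat => hx hy.
  rewrite /fr hn; f_equal; dif; lia.
exact: Dp3.
Qed.
End Cat2.


Lemma block_min (p : cpart) x : x < npts p ->
  exists mn, sb p x mn /\ forall z, sb p x z -> mn <= z.
Proof.
move=> hx; have ex : exists z, sb p x z by exists x; apply: sb_refl.
case: (ex_minnP ex) => mn h1 h2; by exists mn.
Qed.

Lemma block_max (p : cpart) x : x < npts p ->
  exists mx, sb p x mx /\ forall z, sb p x z -> z <= mx.
Proof.
move=> hx; have ex : exists z, sb p x z by exists x; apply: sb_refl.
have ub : forall z, sb p x z -> z <= npts p by move=> z /sb_range [_ /ltnW].
case: (ex_maxnP ex ub) => mx h1 h2; by exists mx.
Qed.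

Lemma interval (p : cpart) : noncrossing p -> 0 < npts p ->
  exists a b, [/\ a <= b, b < npts p &
     forall z, z < npts p -> sb p a z = (a <= z) && (z <= b)].
Proof.
move=> nc hn.
have key : forall d a b, b - a <= d -> sb p a b ->
   (forall z, sb p a z -> (a <= z) && (z <= b)) ->
   exists a b, [/\ a <= b, b < npts p &
     forall z, z < npts p -> sb p a z = (a <= z) && (z <= b)].
  elim=> [|d IH] a b hd hab hin.
  - exists a, b; have [_ hb] := sb_range hab; have := hin _ hab => /andP [h1 h2].
    split => // z hz; apply/idP/idP; first exact: hin.
    by move=> /andP [] ? ?; have -> : z = b by lia.
  - case: (boolP [forall z : 'I_(npts p), ((a <= z) && (z <= b)) ==> sb p a z]) => hall.
      exists a, b; have [_ hb] := sb_range hab; have := hin _ hab => /andP [h1 h2].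
      split => // z hz; apply/idP/idP; first exact: hin.
      by move=> hzz; move/forallP: hall => /(_ (Ordinal hz)) /implyP; apply.
    move/forallPn: hall => [z]; rewrite negb_imply => /andP [/andP [hz1 hz2] hnz].
    have [ha hb] := sb_range hab.
    have za : z != a :> nat by apply: contraNneq hnz => ->; apply: sb_refl.
    have zb : z != b :> nat by apply: contraNneq hnz => ->.
    have inside : forall m, sb p z m -> (a < m) && (m < b).
      move=> m hm; have [_ hmn] := sb_range hm.
      case: (ltngtP m a) => [hma|hma|hma].
      + have := nc m a z b hma ltac:(lia) ltac:(lia) hb (sb_sym hm) hab => hma'.
        by case/negP: hnz; apply: (sb_trans (sb_sym hma')); apply: sb_sym.
      + case: (ltngtP m b) => [hmb|hmb|hmb]; first by lia.
        * have := nc a z b m ltac:(lia) ltac:(lia) hmb hmn hab hm => haz.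
          by rewrite haz in hnz.
        * by case/negP: hnz; rewrite -hmb in hab; exact: sb_trans hab (sb_sym hm).
      + by case/negP: hnz; rewrite hma in hm; apply: sb_sym.
    have [mn [hmn1 hmn2]] := block_min (ltn_ord z).
    have [mx [hmx1 hmx2]] := block_max (ltn_ord z).
    apply: (IH mn mx).
    + by move: (inside _ hmn1) (inside _ hmx1) => /andP [? ?] /andP [? ?]; lia.
    + exact: sb_trans (sb_sym hmn1) hmx1.
    + move=> w hw; have hzw := sb_trans hmn1 hw.
      by rewrite hmn2 // hmx2.
have [mx [h1 h2]] := block_max hn.
apply: (key _ 0 mx (leqnn _) h1) => z hz; by rewrite h2.
Qed.

Definition cw (p : cpart) := up p ++ rev (lo p).

Section CatC.
Variable C : cpart -> Prop.
Hypothesis hC : category C.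
Hypothesis hev : forall p, C p -> forall B, B \in blocks p -> ~~ odd #|B|.
Hypothesis hcol : forall p, C p -> forall B, B \in blocks p ->
     forall u v, u \in B -> v \in B -> colour p u = colour p v.

Lemma cover_blocks (p : cpart) x : x \in cover (blocks p).
Proof. by case/and3P: (blocks_ok p) => /eqP -> _ _; rewrite inE. Qed.

Lemma other p x : C p -> x < npts p -> exists y, [/\ y < npts p, y != x & sb p x y].
Proof.
move=> Cp hx; set x' : 'I_(size (up p) + size (lo p)) := Ordinal hx.
have hB := pblock_mem (cover_blocks x').
have := hev Cp hB; rewrite (cardsD1 x') mem_pblock cover_blocks /= => hodd.
have : 0 < #|pblock (blocks p) x' :\ x'|.
  by move: hodd; case: #|_| => //.
rewrite card_gt0 => /set0Pn [y]; rewrite !inE => /andP [hyx hy].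
exists y; split; [by have := ltn_ord y | | ].
  by apply: contraNneq hyx => h; apply/eqP/val_inj.
by rewrite (sb_pblock x' y).
Qed.

Lemma colour_nth p (u : 'I_(size (up p) + size (lo p))) :
  colour p u = nth colx (cw p) u.
Proof. by rewrite /colour /cw nth_cat. Qed.

Lemma same_col p x y : C p -> sb p x y -> nth colx (cw p) x = nth colx (cw p) y.
Proof.
move=> Cp hxy; have [hx hy] := sb_range hxy.
set x' : 'I_(size (up p) + size (lo p)) := Ordinal hx.
set y' : 'I_(size (up p) + size (lo p)) := Ordinal hy.
have hB := pblock_mem (cover_blocks x').
have := hcol Cp hB (u := x') (v := y').
rewrite !colour_nth /= mem_pblock cover_blocks; apply => //.
by rewrite -(sb_pblock x' y').
Qed.

Lemma pair_in p k : C p -> k <= npts p -> 0 < k ->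
  (forall a b, a < k -> sb p a b -> b < k) ->
  exists i, i.+1 < k /\ sb p i i.+1.
Proof.
case: hC => [hnc _] Cp hk hk0 hcl; have nc := hnc _ Cp.
have key : forall d a b, b - a <= d -> a < b -> b < k -> sb p a b ->
   exists i, i.+1 < k /\ sb p i i.+1.
  elim=> [|d IH] a b hd hab hbk h; first by lia.
  case: (boolP (sb p a a.+1)) => haz.
    by exists a; split => //; lia.
  have [hb1 | hb1] := boolP (b == a.+1); first by move: h; rewrite (eqP hb1) (negbTE haz).
  have [m [hmn hmz hzm]] := other Cp (x := a.+1) ltac:(lia).
  have hmk : m < k by apply: (hcl a.+1) => //; lia.
  case: (ltngtP m a) => [hma|hma|hma].
  - have := nc m a a.+1 b hma ltac:(lia) ltac:(lia) ltac:(lia) (sb_sym hzm) h => hma'.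
    by case/negP: haz; apply: (sb_trans (sb_sym hma')); apply: sb_sym.
  - case: (ltngtP m b) => [hmb|hmb|hmb].
    + apply: (IH a.+1 m) => //; lia.
    + have := nc a a.+1 b m ltac:(lia) ltac:(lia) hmb hmn h hzm => haz'.
      by rewrite haz' in haz.
    + by case/negP: haz; rewrite -hmb in h; exact: sb_trans h (sb_sym hzm).
  - by case/negP: haz; rewrite hma in hzm; apply: sb_sym.
have [y [hyn hy0 hy]] := other Cp (x := 0) ltac:(lia).
apply: (key y 0 y) => //; [lia | lia | exact: hcl hy].
Qed.
End CatC.

Section CatC2.
Variable C : cpart -> Prop.
Hypothesis hC : category C.
Hypothesis hev : forall p, C p -> forall B, B \in blocks p -> ~~ odd #|B|.
Hypothesis hcol : forall p, C p -> forall B, B \in blocks p ->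
     forall u v, u \in B -> v \in B -> colour p u = colour p v.

Lemma split2 (t : seq bool) i : i.+1 < size t ->
  t = take i t ++ nth colx t i :: nth colx t i.+1 :: drop i.+2 t.
Proof.
move=> hi; rewrite -{1}(cat_take_drop i t); congr (_ ++ _).
by rewrite (drop_nth colx) ?(drop_nth colx (n:=i.+1)) //; lia.
Qed.

Lemma seg_del K : forall k t s p r, k <= K -> C p -> up p = [::] -> lo p = rev (t ++ s) ->
  size t = k -> (forall a b, a < k -> sb p a b -> b < k) ->
  dat r [::] (rev s) (fun a b => sb p (a + k) (b + k)) -> C r.
Proof.
elim: K => [|K IH] k t s p r hkK Cp hup hlo hk hcl hr.
  have k0 : k = 0 by lia.
  have t0 : t = [::] by apply/nilP; rewrite /nilp hk k0.
  subst t; rewrite k0 in hr.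
  have -> : r = p; last by [].
  apply: (dat_uniq hr (e' := sb p)); last by move=> a b _ _; rewrite !addn0.
  by have := dat_self p; rewrite hup hlo.
case: (posnP k) => hk0.
  by apply: (IH k t s p r) => //; lia.
have hnp : npts p = size t + size s by rewrite /npts hup hlo size_rev size_cat.
have [i [hik hi]] := pair_in hC hev Cp (k := k) ltac:(lia) hk0 hcl.
have hcc : nth colx t i = nth colx t i.+1.
  have := same_col hcol Cp hi; rewrite /cw hup hlo revK /= !nth_cat; dif => //; lia.
set c := nth colx t i.
have ht := split2 (t := t) (i := i) ltac:(lia).
rewrite -hcc -/c in ht.
set t1 := take i t in ht; set t2 := drop i.+2 t in ht.
have hs1 : size t1 = i by rewrite /t1 size_take; dif; lia.
have hst : size t = size t1 + size t2 + 2 by rewrite {1}ht size_cat /=; lia.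
have hp0 : dat p [::] (rev (t1 ++ c :: c :: (t2 ++ s))) (sb p).
  by have := dat_self p; rewrite hup hlo {1}ht -catA.
pose g x := if x < size t1 then x else x.+2.
have [p' hp'] : exists q, dat q [::] (rev (t1 ++ (t2 ++ s)))
    (fun x y => sb p (g x) (g y)).
  apply: (ex_comp (f := g)) hp0 _ => x; rewrite /= !size_rev !size_cat /= /g; dif; rewrite ?size_cat; lia.
have Cp' : C p' by apply: (capP_L hC Cp hp0 _ hp'); rewrite hs1.
case: (hp') => hp1 hp2 hp3.
apply: (IH (k - 2) (t1 ++ t2) s p') => //.
- lia.
- by rewrite hp2 catA.
- rewrite size_cat; lia.
- move=> a b ha; rewrite hp3 => /and3P [_ _ h].
  have := hcl _ _ _ h; rewrite /g; dif; lia.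
- apply: (dat_ext hr) => a b; rewrite /= size_rev => ha hb.
  rewrite hp3 /= !size_rev !size_cat /g; dif; try lia.
  have -> : (a + (k - 2)).+2 = a + k by lia.
  have -> : (b + (k - 2)).+2 = b + k by lia.
  case: (sb p _ _); rewrite ?andbF ?andbT //; apply/esym/andP; split; lia.
Qed.
End CatC2.


Lemma sb_same (p : cpart) u v w : sb p u v -> sb p u w = sb p v w.
Proof.
move=> h; apply/idP/idP => h2; first exact: sb_trans (sb_sym h) h2.
exact: sb_trans h h2.
Qed.

Section Main.
Variable C : cpart -> Prop.
Hypothesis hC : category C.
Hypothesis hev : forall p, C p -> forall B, B \in blocks p -> ~~ odd #|B|.
Hypothesis hcol : forall p, C p -> forall B, B \in blocks p ->
     forall u v, u \in B -> v \in B -> colour p u = colour p v.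
Variable D : cpart -> Prop.
Hypothesis hD : category D.
Hypothesis hS : forall q, C_col C colx q \/ C_col C coly q -> D q.

Lemma mono_S q : C q -> up q = [::] ->
  (forall x y, x < npts q -> y < npts q -> sb q x y) -> D q.
Proof.
move=> Cq hup hall; apply: hS.
case hl: (lo q) => [|a l].
  by left; split => //; rewrite /mono hup hl.
set c := nth colx (cw q) 0.
have hn : npts q = size (lo q) by rewrite /npts hup.
have hm : mono c q.
  rewrite /mono hup /= -all_rev; apply/(all_nthP colx) => i hi.
  rewrite size_rev in hi.
  have hi2 : i < npts q by rewrite hn. have h0 : 0 < npts q by rewrite hn hl.
  have := same_col hcol Cq (x := 0) (y := i) (hall 0 i h0 hi2).
  by rewrite /c /cw hup /= => ->.
by case: c hm => hm; [right | left].
Qed.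

Lemma main n : forall p, size (lo p) <= n -> C p -> up p = [::] -> D p.
Proof.
elim: n => [|n IH] p hn Cp hup.
  apply: mono_S => // x y hx; exfalso; move: hx; rewrite /npts hup /=; lia.
set N := npts p.
have hN : N = size (lo p) by rewrite /N /npts hup.
case: (boolP [forall x : 'I_N, forall y : 'I_N, sb p x y]) => hall.
  apply: mono_S => // x y hx hy.
  by move/forallP: hall => /(_ (Ordinal hx)) /forallP /(_ (Ordinal hy)).
move/forallPn: hall => [x0] /forallPn [y0 hxy0].
case: hC => [hnc _].
have hN0 : 0 < N by have := ltn_ord x0; lia.
have [a [b [hab hbN hI0]]] := interval (hnc _ Cp) hN0.
set m := b - a + 1.
have hmN : m < N.
  case: (ltnP m N) => // hmN; exfalso; apply: (negP hxy0).
  have h0 : forall z, z < N -> sb p a z by move=> z hz; rewrite hI0 //; lia.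
  exact: sb_trans (sb_sym (h0 _ (ltn_ord x0))) (h0 _ (ltn_ord y0)).
set s := rev (lo p).
have hps : dat p [::] (rev s) (sb p) by rewrite /s revK; have := dat_self p; rewrite hup.
have hsN : size s = N by rewrite /s size_rev hN.
have [p1 hp1] : exists q, dat q [::] (rev (rot a s))
    (fun x y => sb p (fr N a x) (fr N a y)).
  apply: (ex_comp (f := fr N a)) hps _ => x; rewrite /= !size_rev size_rot /fr -/s hsN; dif; lia.
have hrot1 := rot_L hC (j := a) (s := s) ltac:(lia) hps.
rewrite hsN in hrot1; have Cp1 : C p1 by rewrite -(hrot1 _ hp1).
case: (hp1) => hp1u hp1l hp1s.
have hI : forall x y, x < m -> y < N -> sb p1 x y = (y < m).
  move=> x y hx hy; rewrite hp1s /= size_rev size_rot hsN.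
  have -> : fr N a x = a + x by rewrite /fr; dif; lia.
  rewrite (sb_same (v := a)); last by apply: sb_sym; rewrite hI0; lia.
  rewrite hI0; last by rewrite /fr; dif; lia.
  rewrite /fr; dif; (have -> : x < N by lia); (have -> : y < N by lia); rewrite /=; lia.
set w := rot a s.
have hwN : size w = N by rewrite size_rot.
have hp1d : dat p1 [::] (rev (take m w ++ drop m w)) (sb p1).
  by rewrite cat_take_drop; have := dat_self p1; rewrite hp1u hp1l.
have [p' hp'] : exists q, dat q [::] (rev (drop m w)) (fun x y => sb p1 (x + m) (y + m)).
  apply: (ex_comp (f := fun x => x + m)) hp1d _ => x.
  rewrite /= !size_rev size_cat size_drop size_take hwN; dif; lia.
have Cp' : C p'.
  apply: (seg_del hC hev hcol (K := m) (k := m) (t := take m w) (s := drop m w) (p := p1)) => //.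
  - by rewrite hp1l cat_take_drop.
  - by rewrite size_take hwN; dif; lia.
  - by move=> x y hx hxy; have [_ hy] := sb_range hxy; rewrite -(hI x y) //; move: hy; rewrite /npts hp1u hp1l size_rev -/w hwN.
case: (hp') => hp'u hp'l hp's.
have Dp' : D p'.
  apply: IH => //; rewrite hp'l size_rev size_drop hwN; lia.
have [p2 hp2] : exists q, dat q [::] (rev (rot m w))
    (fun x y => sb p1 (fr N m x) (fr N m y)).
  apply: (ex_comp (f := fr N m)) (dat_ext hp1d (e' := sb p1) (fun _ _ _ _ => erefl)) _ => x.
  rewrite /= !size_rev size_rot size_cat size_drop size_take hwN /fr; dif; lia.
have hp1w : dat p1 [::] (rev w) (sb p1) by rewrite -{1}(cat_take_drop m w).
have Cp2 : C p2.
  have := rot_L hC (j := m) (s := w) ltac:(lia) hp1w; rewrite hwN => h.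
  by rewrite -(h _ hp2).
case: (hp2) => hp2u hp2l hp2s.
have [bb hbb] : exists q, dat q [::] (rev (take m w))
    (fun x y => sb p2 (x + (N - m)) (y + (N - m))).
  apply: (ex_comp (f := fun x => x + (N - m))) (dat_ext hp2 (e' := sb p2) _) _.
  - move=> x y; rewrite /= size_rev size_rot hwN => hx hy.
    by rewrite hp2s /= size_rev size_rot hwN hx hy.
  - move=> x; rewrite /= !size_rev size_rot size_take hwN; dif; lia.
case: (hbb) => hbu hbl hbs.
have Cbb : C bb.
  apply: (seg_del hC hev hcol (K := N - m) (k := N - m) (t := drop m w) (s := take m w) (p := p2)) => //.
  - by rewrite size_drop hwN.
  - move=> x y hx; rewrite hp2s /= size_rev size_rot hwN => /and3P [_ hy h].
    have hfx : fr N m x = x + m by rewrite /fr; dif; lia.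
    rewrite hfx in h.
    case: (ltnP (fr N m y) m) => hfy.
      by move: (sb_sym h); rewrite hI //; [lia | rewrite /fr; dif; lia].
    move: hfy; rewrite /fr; dif; lia.
have Dbb : D bb.
  apply: mono_S => // x y; rewrite /npts hbu hbl /= size_rev size_take hwN; dif; try lia.
  move=> hx hy; rewrite hbs /= size_rev size_take hwN h hx hy /=.
  rewrite hp2s /= size_rev size_rot hwN; (have -> : x + (N - m) < N by lia);
    (have -> : y + (N - m) < N by lia); rewrite /=.
  rewrite hI //; rewrite /fr; dif; lia.
have Dp1 : D p1.
  apply: (tensor_L hD Dp' Dbb hp'u hbu).
  rewrite hp'l hbl -rev_cat cat_take_drop.
  apply: (dat_ext hp1w) => x y; rewrite /= size_rev hwN => hx hy.
  rewrite /tens_rel size_rev size_take hwN.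
  case: (ltnP m N) => [_|hh]; last by move: hh; rewrite leqNgt hmN.
  case: (ltnP x m) => hxm; case: (ltnP y m) => hym /=.
  - rewrite hI // hym hbs /= size_rev size_take hwN hmN hxm hym /=.
    rewrite hp2s /= size_rev size_rot hwN; (have -> : x + (N - m) < N by lia);
      (have -> : y + (N - m) < N by lia); rewrite /=.
    rewrite hI //; rewrite /fr; dif; lia.
  - by rewrite hI //; rewrite ltnNge hym.
  - by apply/negbTE; apply/negP => /sb_sym; rewrite hI //; rewrite ltnNge hxm.
  - rewrite hp's /= size_rev size_drop hwN.
    have -> : x - m + m = x by lia.
    have -> : y - m + m = y by lia.
    have -> : x - m < 0 + (N - m) by lia. by have -> : y - m < 0 + (N - m) by lia.
have h := rot_L hD (j := a) (s := s) ltac:(lia) hps; rewrite hsN in h.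
exact: (proj2 (h _ hp1) Dp1).
Qed.
End Main.

Theorem lemma6p2 (C : cpart -> Prop) :
  category C ->
  (forall p, C p -> forall B, B \in blocks p -> ~~ odd #|B|) ->
  (exists p, C p /\ exists2 B, B \in blocks p & 4 <= #|B|) ->
  (forall p, C p -> forall B, B \in blocks p ->
     forall u v, u \in B -> v \in B -> colour p u = colour p v) ->
  free_product C.
Proof.
move=> hC hev _ hcol p; split.
- move=> Cp D hD hS.
  have [r hr] : exists r, dat r [::] (rev (up p ++ rev (lo p))) (sb p).
    apply: exists_dat; have := dat_equiv (dat_self p).
    by rewrite /= size_rev size_cat size_rev.
  have Cr : C r by rewrite -(to_L hC (dat_self p) hr).
  have Dr : D r.
    case: (hr) => hr1 hr2 _.
    by apply: (main hC hev hcol hD hS (n := size (lo r))).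
  by rewrite (to_L hD (dat_self p) hr).
- move=> H; apply: H => //; by move=> q [[]|[]].
Qed.
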